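(* Let $C\subseteq\mathbb{R}^{n+1}$ be an open cone with base-point $b\in C$, let $z\in\partial C$, $y\in C$, and $\gamma(t)=(1-t)z+ty$ for $t\in(0,1]$. Then for each $x\in C$, \[\lim_{t\to0}\big(d_C(x,\gamma(t))-d_C(b,\gamma(t))\big)=\mathcal{RF}_C(x,z)-\mathcal{RF}_C(b,z)+\mathcal F_{\tau(C,z)}(x,y)-\mathcal F_{\tau(C,z)}(b,y).\]
   Context: An open cone is a nonempty open convex set $C$ with $\lambda C\subseteq C$ for $\lambda>0$. For an open cone $K$, $x\in K$ and $y\in\mathbb{R}^{n+1}$, $M(y/x;K)=\inf\{\lambda>0\colon\lambda x-y\in\overline K\}$. Funk metric: $\mathcal F_K(x,y)=\log M(x/y;K)$ ($y\in K$); reverse-Funk metric: $\mathcal{RF}_K(x,y)=\log M(y/x;K)$ ($x\in K$); Hilbert's projective metric: $d_K(x,y)=\mathcal F_K(x,y)+\mathcal{RF}_K(x,y)$ for $x,y\in K$. The open tangent cone at $z\in\partial C$ is $\tau(C,z)=\{\lambda(w-z)\colon\lambda>0,w\in C\}$. *)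

(* Defs.v *)
From HB Require Import structures.
From mathcomp Require Import all_boot all_order all_algebra.
From mathcomp Require Import all_classical all_reals all_analysis.
Set Implicit Arguments. Unset Strict Implicit. Unset Printing Implicit Defensive.
Import Order.TTheory GRing.Theory Num.Theory.
Import numFieldNormedType.Exports.
Local Open Scope classical_set_scope.
Local Open Scope ring_scope.

Section Defs.
Variables (R : realType) (n : nat).
Local Notation V := 'rV[R]_n.+1.

Definition open_cone (C : set V) : Prop :=
  [/\ C !=set0, open C,
      (forall x y (t : R), C x -> C y -> 0 <= t -> t <= 1 ->
          C ((1 - t) *: x + t *: y))
    & (forall (l : R) x, 0 < l -> C x -> C (l *: x))].

Definition bdry (C : set V) : set V := closure C `\` interior C.

(* Mgauge K x y = M(y/x;K) = inf { l > 0 : l x - y \in closure K } *)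
Definition Mgauge (K : set V) (x y : V) : R :=
  inf [set l : R | 0 < l /\ closure K (l *: x - y)].

Definition funk (K : set V) (x y : V) : R := ln (Mgauge K y x).
Definition rfunk (K : set V) (x y : V) : R := ln (Mgauge K x y).
Definition hilbert (K : set V) (x y : V) : R := funk K x y + rfunk K x y.

Definition tangent_cone (C : set V) (z : V) : set V :=
  [set v | exists (l : R) (w : V), [/\ 0 < l, C w & v = l *: (w - z)]].
End Defs.

(* Main.v *)
Require Import Defs.
From HB Require Import structures.
From mathcomp Require Import all_boot all_order all_algebra.
From mathcomp Require Import all_classical all_reals all_analysis.
From mathcomp Require Import ring lra.
Import Order.TTheory GRing.Theory Num.Theory.
Import numFieldNormedType.Exports.
Local Open Scope classical_set_scope.
Local Open Scope ring_scope.

Lemma aux_abs {R : realType} {Mz Mg A B t e: R}: Mg <= Mz + t * A ->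
  Mz <= Mg + t * B -> t * (A + B + 1) <= e -> 0 <= A -> 0 <= B -> 0 < t ->
  `|Mz - Mg| <= e.
Proof.
move=> h1 h2 h3 hA hB ht.
have p1 : 0 <= t * A by rewrite mulr_ge0 // ltW.
have p2 : 0 <= t * B by rewrite mulr_ge0 // ltW.
move: h3; rewrite !mulrDr mulr1 => h3.
rewrite ler_norml; apply/andP; split; lra.
Qed.

Lemma aux_sy {R : realType} (s k r : R) : 0 < s -> 0 <= k -> 0 < r ->
  s < r / 2 / (k + 1) -> s * k < r / 2.
Proof.
move=> s0 k0 r0; rewrite ltr_pdivlMr; last by apply: ltr_wpDl.
move=> h; apply: le_lt_trans h; rewrite ler_pM2l //; lra.
Qed.

Lemma zmod_id {U : zmodType} (p q r : U) : q + r = p - ((p - q) - r).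
Proof. by rewrite !opprB addrCA subrKC addrC. Qed.

Lemma aux_K {R : realType} {s K0 t : R} : 0 < t -> 0 < s -> 0 < K0 ->
  t < s / (s + K0) -> K0 <= s / t * (1 - t).
Proof.
move=> t0 s0 K00; rewrite ltr_pdivlMr; last by apply: ltr_wpDl => //; apply: ltW.
move=> h; rewrite mulrAC ler_pdivlMr //.
rewrite mulrDr mulr1 mulrN; rewrite mulrDr in h; lra.
Qed.

Lemma aux_abs2 {R : realType} {L f e : R} : L <= f -> f <= L + e -> `|L - f| <= e.
Proof. move=> h1 h2; rewrite ler_norml; apply/andP; split; lra. Qed.

Lemma aux_half {R : realType} : (0:R) < (2^-1 : R) < (1 : R).
Proof. apply/andP; split; lra. Qed.

Lemma aux_fin {R : realType} {s L e : R} : s < L + e / 2 -> s + e / 2 <= L + e.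
Proof. move=> h; lra. Qed.

Section S.
Variables (R : realType) (n : nat).
Local Notation V := 'rV[R]_n.+1.
Variable C : set V.
Hypothesis hC : open_cone C.

Lemma clP (A : set V) p :
  closure A p <-> forall e : R, 0 < e -> exists c, A c /\ `|p - c| < e.
Proof.
split.
- move=> cl e e0; have [c [Ac bc]] := cl (ball p e) (nbhsx_ballx p e e0).
  by exists c; split=> //; move: bc; rewrite -ball_normE.
- move=> H B /nbhs_ballP [e /= e0 sB]; have [c [Ac pc]] := H e e0.
  by exists c; split=> //; apply: sB; rewrite -ball_normE.
Qed.

Lemma C_open x : C x -> exists2 r : R, 0 < r & forall w, `|x - w| < r -> C w.
Proof.
case: hC => _ oC _ _ Cx; move: oC; rewrite openE => /(_ x Cx).
move=> /nbhs_ballP[r r0 sB]; exists r => // w xw; apply: sB.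
by rewrite -ball_normE.
Qed.

Lemma CZ {l a} : 0 < l -> C a -> C (l *: a).
Proof. by case: hC => _ _ _ sc; apply: sc. Qed.

Lemma CD {a b} : C a -> C b -> C (a + b).
Proof.
case: hC => _ _ cv sc Ca Cb.
have h2 : (0:R) <= 2^-1 by rewrite invr_ge0.
have h2' : (2^-1:R) <= 1 by rewrite invf_le1 // ler1n.
have := sc 2 _ (ltr0Sn _ _) (cv a b _ Ca Cb h2 h2').
have -> : (1 - 2^-1 : R) = 2^-1 by field.
rewrite scalerDr !scalerA mulfV ?scale1r //.
Qed.

Lemma C_cl {a} : C a -> closure C a.
Proof. exact: subset_closure. Qed.

Lemma clCD_C {a b} : closure C a -> C b -> C (a + b).
Proof.
move=> /clP cla Cb; have [r r0 hr] := C_open _ Cb.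
have [c [Cc ac]] := cla r r0.
have -> : a + b = c + (b + (a - c)) by rewrite [RHS]addrCA [c + _]addrC subrK addrC.
apply: CD => //; apply: hr.
by rewrite opprD addNKr normrN.
Qed.

Lemma clCD {a b} : closure C a -> closure C b -> closure C (a + b).
Proof.
move=> cla /clP clb; apply/clP => e e0.
have [c [Cc bc]] := clb e e0.
exists (a + c); split; first exact: clCD_C.
by rewrite opprD addrACA subrr add0r.
Qed.

Lemma cl0 : closure C 0.
Proof.
case: hC => [[c Cc]] _ _ sc; apply/clP => e e0.
set d := e / (`|c| + 1).
have d0 : 0 < d by rewrite divr_gt0 // ltr_pwDr.
exists (d *: c); split; first exact: sc.
rewrite sub0r normrN normrZ gtr0_norm // /d -mulrA gtr_pMr //.
by rewrite mulrC ltr_pdivrMr ?mul1r ?ltrDl // ltr_pwDr.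
Qed.

Lemma clCZ {l a} : 0 <= l -> closure C a -> closure C (l *: a).
Proof.
rewrite le_eqVlt => /orP[/eqP<-|l0]; first by rewrite scale0r => _; exact: cl0.
move=> /clP cla; apply/clP => e e0.
have [c [Cc ac]] := cla (e / l) (divr_gt0 e0 l0).
exists (l *: c); split; first exact: CZ.
by rewrite -scalerBr normrZ gtr0_norm // mulrC -ltr_pdivlMr.
Qed.


Lemma A_ne {x} v : C x -> exists l, 0 < l /\ closure C (l *: x - v).
Proof.
move=> Cx; have [r r0 hr] := C_open _ Cx.
have v1 : 0 < `|v| + 1 by rewrite ltr_pwDr.
set l := (`|v| + 1) / r.
have l0 : 0 < l by rewrite divr_gt0.
exists l; split=> //; apply: C_cl.
have -> : l *: x - v = l *: (x - l^-1 *: v).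
  by rewrite scalerBr scalerA mulfV ?gt_eqF // scale1r.
apply: CZ => //; apply: hr.
rewrite opprB subrKC normrZ gtr0_norm ?invr_gt0 //.
by rewrite /l invf_div mulrAC ltr_pdivrMr // ltr_pM2l // ltrDl.
Qed.

Lemma M_ge0 {x} v : C x -> 0 <= Mgauge C x v.
Proof.
move=> Cx; apply: lb_le_inf; first by have [l hl] := A_ne v Cx; exists l.
by move=> l [l0 _]; apply: ltW.
Qed.

Lemma M_le x v l : 0 < l -> closure C (l *: x - v) -> Mgauge C x v <= l.
Proof.
move=> l0 hl; apply: ge_inf => //.
by exists 0 => m [m0 _]; apply: ltW.
Qed.

Lemma M_adh {x} v e : C x -> 0 < e ->
  exists l, [/\ 0 < l, closure C (l *: x - v) & l < Mgauge C x v + e].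
Proof.
move=> Cx e0.
have hi : has_inf [set l : R | 0 < l /\ closure C (l *: x - v)].
  split; first by have [l hl] := A_ne v Cx; exists l.
  by exists 0 => m [m0 _]; apply: ltW.
have [l [hl1 hl2] hl3] := inf_adherent e0 hi.
by exists l.
Qed.

Lemma M_sub {x} a b : C x -> Mgauge C x (a + b) <= Mgauge C x a + Mgauge C x b.
Proof.
move=> Cx; apply/ler_addgt0Pr => e e0.
have e2 : 0 < e / 2 by rewrite divr_gt0.
have [la [la0 ha lae]] := M_adh a _ Cx e2.
have [lb [lb0 hb lbe]] := M_adh b _ Cx e2.
apply: (le_trans (M_le _ _ _ (addr_gt0 la0 lb0) _)).
  by rewrite scalerDl opprD addrACA; apply: clCD.
apply: (le_trans (ltW (ltrD lae lbe))).
by rewrite addrACA -splitr.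
Qed.

Lemma M_scale x w t : C x -> 0 < t -> Mgauge C x (t *: w) <= t * Mgauge C x w.
Proof.
move=> Cx t0; apply/ler_addgt0Pr => e e0.
have [la [la0 ha lae]] := M_adh w _ Cx (divr_gt0 e0 t0).
apply: (le_trans (M_le _ _ _ (mulr_gt0 t0 la0) _)).
  by rewrite -scalerA -scalerBr; apply: clCZ => //; apply: ltW.
have : t * la <= t * (Mgauge C x w + e / t) by rewrite ler_pM2l // ltW.
by rewrite mulrDr mulrCA mulfV ?gt_eqF // mulr1.
Qed.

Lemma gamE (z y : V) (t : R) : (1 - t) *: z + t *: y = z + t *: (y - z).
Proof. by rewrite scalerBl scale1r scalerBr addrAC -addrA. Qed.

Lemma M_cont x z y : C x ->
  (fun t => Mgauge C x ((1 - t) *: z + t *: y)) @ 0^'+ --> Mgauge C x z.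
Proof.
move=> Cx; apply/cvgrPdist_le => e e0.
have m1 := M_ge0 (y - z) Cx; have m2 := M_ge0 (z - y) Cx.
have K0 : 0 < Mgauge C x (y - z) + Mgauge C x (z - y) + 1 :=
  ltr_wpDl (addr_ge0 m1 m2) ltr01.
set K := Mgauge C x (y - z) + Mgauge C x (z - y) + 1.
near=> t.
have t0 : 0 < t by near: t; exact: nbhs_right_gt.
have te : t < e / K by near: t; apply: nbhs_right_lt; rewrite divr_gt0.
rewrite gamE.
have h1 : Mgauge C x (z + t *: (y - z)) <= Mgauge C x z + t * Mgauge C x (y - z).
  by apply: (le_trans (M_sub _ _ Cx)); rewrite lerD2l M_scale.
have h2 : Mgauge C x z <= Mgauge C x (z + t *: (y - z)) + t * Mgauge C x (z - y).
  have {1}-> : z = (z + t *: (y - z)) + t *: (z - y).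
    by rewrite -addrA -scalerDr [y - z + _]addrC addrA subrK subrr scaler0 addr0.
  by apply: (le_trans (M_sub _ _ Cx)); rewrite lerD2l M_scale.
have hK : t * K <= e.
  apply: ltW; move: te; rewrite ltr_pdivlMr //.
move: hK; rewrite /K => hK; exact: (aux_abs h1 h2 hK m1 m2 t0).
Unshelve. all: by end_near.
Qed.


Lemma T1 z u K : 0 < K -> closure C (u + K *: z) -> closure (tangent_cone C z) u.
Proof.
move=> K0 /clP h; apply/clP => e e0; have [c [Cc d]] := h e e0.
exists (c - K *: z); split; last by rewrite opprB addrA.
exists K, (K^-1 *: c); split => //; first by apply: CZ; rewrite ?invr_gt0.
by rewrite scalerBr scalerA mulfV ?gt_eqF // scale1r.
Qed.

Lemma T2 z y a eps : C y -> closure (tangent_cone C z) a -> 0 < eps ->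
  exists2 K0, 0 < K0 & C (a + eps *: y + K0 *: z).
Proof.
move=> Cy /clP ha e0.
have [r r0 hr] := C_open _ (CZ e0 Cy).
have [a' [[l [w [l0 Cw ->]]] d]] := ha r r0.
exists l => //.
have -> : a + eps *: y + l *: z = l *: w + (eps *: y + (a - l *: (w - z))).
  by rewrite scalerBr opprB [RHS]addrCA [l *: w + _]addrCA subrKC -addrA addrCA.
apply: CD; first exact: CZ.
by apply: hr; rewrite opprD addNKr normrN.
Qed.

Lemma T_ev z u K0 K : closure C z -> C (u + K0 *: z) -> K0 <= K ->
  closure C (u + K *: z).
Proof.
move=> hz hu hK.
have -> : u + K *: z = (u + K0 *: z) + (K - K0) *: z.
  by rewrite -addrA -scalerDl subrKC.
by apply: clCD; [exact: C_cl | apply: clCZ => //; rewrite subr_ge0].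
Qed.

Lemma Lpos z y x : ~ C z -> C x -> ~ (forall eps : R, 0 < eps -> exists s,
   [/\ 0 < s, s < eps & closure (tangent_cone C z) (s *: y - x)]).
Proof.
move=> nz Cx H; have [r r0 hr] := C_open _ Cx.
have r2 : 0 < r / 2 by rewrite divr_gt0.
have y1 : 0 < `|y| + 1 by apply: ltr_wpDl.
have [s [s0 sl hs]] := H (r / 2 / (`|y| + 1)) (divr_gt0 r2 y1).
have [a' [[l [w [l0 Cw ->]]] d]] := (clP _ _).1 hs (r / 2) r2.
have Cn : C (- (l *: (w - z))).
  apply: hr; rewrite opprK (zmod_id (s *: y)).
  apply: (le_lt_trans (ler_normB _ _)).
  rewrite (splitr r); apply: ltrD => //.
  by rewrite normrZ gtr0_norm //; apply: aux_sy.
apply: nz.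
have -> : z = l^-1 *: (- (l *: (w - z))) + w.
  by rewrite scalerN scalerA mulVf ?gt_eqF // scale1r opprB subrK.
by apply: CD => //; apply: CZ; rewrite ?invr_gt0.
Qed.


Lemma gam_C {z y t} : closure C z -> C y -> 0 < t -> t <= 1 ->
  C ((1 - t) *: z + t *: y).
Proof.
move=> hz Cy t0 t1; apply: clCD_C; last exact: CZ.
by apply: clCZ => //; rewrite subr_ge0.
Qed.

Lemma gam_eq (z y x : V) (l t : R) :
  l *: ((1 - t) *: z + t *: y) - x = (l * t) *: y - x + (l * (1 - t)) *: z.
Proof. by rewrite scalerDr !scalerA -addrA addrC. Qed.

Lemma AtoT {z y x : V} {t l : R} : 0 < t < 1 -> 0 < l ->
  closure C (l *: ((1 - t) *: z + t *: y) - x) ->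
  closure (tangent_cone C z) ((l * t) *: y - x).
Proof.
move=> /andP[t0 t1] l0; rewrite gam_eq; apply: T1.
by rewrite mulr_gt0 // subr_gt0.
Qed.

Lemma funk_lim z y x : closure C z -> ~ C z -> C y -> C x ->
  [/\ 0 < Mgauge (tangent_cone C z) y x,
   (forall t, 0 < t < 1 ->
      Mgauge (tangent_cone C z) y x <= t * Mgauge C ((1 - t) *: z + t *: y) x) &
   (fun t => t * Mgauge C ((1 - t) *: z + t *: y) x) @ 0^'+ -->
      Mgauge (tangent_cone C z) y x].
Proof.
move=> hz nz Cy Cx.
set T := tangent_cone C z.
set L := Mgauge T y x.
have hlb : has_lbound [set s : R | 0 < s /\ closure T (s *: y - x)].
  by exists 0 => m [m0 _]; apply: ltW.
have hAT : has_inf [set s : R | 0 < s /\ closure T (s *: y - x)].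
  split => //.
  have h2 : (0 : R) < 2^-1 by rewrite invr_gt0.
  have h21 : (0 : R) < 2^-1 < 1 := aux_half.
  have [l [l0 hl]] := A_ne x (gam_C hz Cy h2 (ltW (proj2 (andP h21)))).
  by exists (l * 2^-1); split; [rewrite mulr_gt0 | exact: AtoT].
have L0 : 0 <= L by apply: lb_le_inf; [case: hAT | by move=> m [m0 _]; apply: ltW].
have Lp : 0 < L.
  rewrite lt_neqAle L0 andbT; apply/eqP => L0e.
  apply: (Lpos z y x nz Cx) => eps e0.
  have [s [s0 hs] sl] := inf_adherent e0 hAT.
  have sl' : s < L + eps := sl.
  by exists s; split => //; move: sl'; rewrite -L0e add0r.
have low : forall t, 0 < t < 1 -> L <= t * Mgauge C ((1 - t) *: z + t *: y) x.
  move=> t /[dup] ht /andP[t0 t1].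
  have Cg := gam_C hz Cy t0 (ltW t1).
  rewrite mulrC -(@ler_pdivrMr _ t _ _ t0); apply: lb_le_inf.
    by have [l hl] := A_ne x Cg; exists l.
  move=> l [l0 hl]; rewrite (@ler_pdivrMr _ t _ _ t0).
  by apply: ge_inf => //; split; [rewrite mulr_gt0 | exact: AtoT].
split => //.
apply/cvgrPdist_le => e e0.
have e2 : 0 < e / 2 by rewrite divr_gt0.
have [s [s0 hs] sl] := inf_adherent e2 hAT.
have [K0 K00 hK0] := T2 _ _ _ _ Cy hs e2.
set s' := s + e / 2.
have s'0 : 0 < s' by rewrite addr_gt0.
have hK0' : C (s' *: y - x + K0 *: z).
  by rewrite /s' scalerDl (addrAC (s *: y) ((e / 2) *: y)).
near=> t.
have t0 : 0 < t by near: t; exact: nbhs_right_gt.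
have t1 : t < 1 by near: t; exact: nbhs_right_lt.
have tK : t < s' / (s' + K0).
  by near: t; apply: nbhs_right_lt; rewrite divr_gt0 // addr_gt0.
have ht : 0 < t < 1 by rewrite t0 t1.
apply: aux_abs2; first exact: low.
have l0 : 0 < s' / t by rewrite divr_gt0.
have hM : Mgauge C ((1 - t) *: z + t *: y) x <= s' / t.
  apply: M_le => //; rewrite gam_eq divfK ?gt_eqF //.
  by apply: (T_ev _ _ _ _ hz hK0'); apply: aux_K.
apply: (le_trans (_ : _ <= t * (s' / t))); first by rewrite ler_pM2l.
rewrite mulrC divfK ?gt_eqF // /s'.
have sl' : s < L + e / 2 := sl.
by apply: aux_fin.
Unshelve. all: by end_near.
Qed.

End S.

Lemma aux_g {R : realType} (a b c p q : R) :
  (a - c + p) - (b - c + q) = (a - b) + (p - q).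
Proof. lra. Qed.

Lemma aux_g2 {R : realType} {fx fb Mgx Mgb Mx Mb lt : R} :
  Mgx = fx - lt -> Mgb = fb - lt -> (fx - fb) + (Mx - Mb) = (Mgx + Mx) - (Mgb + Mb).
Proof. move=> -> ->; lra. Qed.

Lemma aux_t {R : realType} (a b c d : R) :
  a - b + c - d = (c - d) + (a - b).
Proof. lra. Qed.

Lemma cvg_eqr {R : realType} {T : Type} {F : set_system T} (f : T -> R) (a b : R) :
  a = b -> f @ F --> a -> f @ F --> b.
Proof. by move=> ->. Qed.

Theorem lemma4p1 (R : realType) (n : nat) (C : set 'rV[R]_n.+1)
    (b z y : 'rV[R]_n.+1) :
  open_cone C -> C b -> bdry C z -> C y ->
  forall x : 'rV[R]_n.+1, C x ->
  (* the right-hand side is well defined (log of a positive number) *)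
  0 < Mgauge C x z -> 0 < Mgauge C b z ->
  (fun t : R => hilbert C x ((1 - t) *: z + t *: y)
                - hilbert C b ((1 - t) *: z + t *: y))
    @ 0^'+ -->
  (rfunk C x z - rfunk C b z
   + funk (tangent_cone C z) x y - funk (tangent_cone C z) b y).
Proof.
move=> hC Cb [hz nint] Cy x Cx Mx Mb.
have nz : ~ C z.
  move=> Cz; apply: nint; case: hC => _ oC _ _; move: oC; rewrite openE.
  by move=> /(_ z Cz).
have [Lx0 lowx cvx] := @funk_lim R n C hC z y x hz nz Cy Cx.
have [Lb0 lowb cvb] := @funk_lim R n C hC z y b hz nz Cy Cb.
have rx := @M_cont R n C hC x z y Cx.
have rb := @M_cont R n C hC b z y Cb.
set T := tangent_cone C z.
have H : (fun t => (ln (t * Mgauge C ((1 - t) *: z + t *: y) x)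
                   - ln (t * Mgauge C ((1 - t) *: z + t *: y) b))
                 + (ln (Mgauge C x ((1 - t) *: z + t *: y))
                   - ln (Mgauge C b ((1 - t) *: z + t *: y)))) @ 0^'+ -->
   ((funk T x y - funk T b y) + (rfunk C x z - rfunk C b z)).
  apply: cvgD; apply: cvgB.
  - exact: (continuous_cvg _ (continuous_ln Lx0) cvx).
  - exact: (continuous_cvg _ (continuous_ln Lb0) cvb).
  - exact: (continuous_cvg _ (continuous_ln Mx) rx).
  - exact: (continuous_cvg _ (continuous_ln Mb) rb).
apply: (cvg_eqr _ _ _ (esym (aux_t (rfunk C x z) (rfunk C b z)
   (funk T x y) (funk T b y)))).
apply: (cvg_trans _ H); apply: near_eq_cvg; near=> t.
have t0 : 0 < t by near: t; exact: nbhs_right_gt.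
have t1 : t < 1 by near: t; exact: nbhs_right_lt.
have ht : 0 < t < 1 by rewrite t0 t1.
set g := (1 - t) *: z + t *: y.
have ex : ln (Mgauge C g x) = ln (t * Mgauge C g x) - ln t.
  have fpos : 0 < t * Mgauge C g x := lt_le_trans Lx0 (lowx t ht).
  by rewrite -ln_div ?posrE // [t * _]mulrC mulfK ?gt_eqF.
have eb : ln (Mgauge C g b) = ln (t * Mgauge C g b) - ln t.
  have fpos : 0 < t * Mgauge C g b := lt_le_trans Lb0 (lowb t ht).
  by rewrite -ln_div ?posrE // [t * _]mulrC mulfK ?gt_eqF.
rewrite /=.
rewrite /hilbert /funk /rfunk.
exact: (aux_g2 ex eb).
Unshelve. all: by end_near.
Qed.
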